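(* Let $S$ be any one of the subspecies $33_3$, $33_4$, $34$, $35_3$, $35_4$, $36_1$, $36_2$, $36_s$, $37$, $38$, $39$ of isonemal fabrics. Then there exist orders $n$ such that every isonemal fabric of subspecies $S$ and of order $n$ whose symmetry group is based on a level-1 lattice unit of area $5$ (i.e. $M_1^2+N_1^2=5$) can be perfectly coloured by thin striping with $5$ colours in such a way that the set of redundant cells is arranged as the $(5,3)$ satin of order $5$.
   Context: Fabrics. Strands are parallel bands of unit width: warps are vertical, wefts horizontal, and the warp $\{i\}\times\mathbb{R}$-band and weft $\mathbb{R}\times\{j\}$-band cross in the unit square cell $(i,j)$, $i,j\in\mathbb{Z}$. A (pre)fabric specifies at every cell which of the two crossing strands lies on top as seen from a fixed side (the obverse); its design colours cell $(i,j)$ dark if the warp is on top and pale if the weft is on top. Designs are doubly periodic; a fabric is a prefabric that does not fall apart into separate layers. The order of a fabric is the common period of the dark/pale sequence along its strands. Symmetries. A symmetry is a pair $(g,\epsilon)$ where $g$ is an isometry of the plane mapping the set of strands onto itself and $\epsilon$ is either the identity or $\tau$, the reflection in the plane of the fabric (which reverses which strand is on top in every cell), such that the composite maps the fabric onto itself (strands to strands, preserving all over/under relations if $\epsilon$ is the identity, reversing all of them if $\epsilon=\tau$). They form the symmetry group $G_1$; those with $\epsilon$ the identity are side-preserving, the others side-reversing. $G_2$ denotes the group of isometric parts $g$. A fabric is isonemal if $G_1$ acts transitively on its strands. Species 33–39. These are the isonemal fabrics whose symmetry group contains quarter turns (possibly composed with $\tau$) but no reflections or glide-reflections (group type $p4$).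 A lattice unit of $G_1$ is a square whose corners are quarter-turn centres and whose sides are the vectors $(M,N)$, $(-N,M)$ generating the translation lattice of $G_1$; its centre is also a quarter-turn centre. A lattice unit is of level 1 if $M,N$ are relatively prime and of opposite parity. If the level-1 unit has side vectors $v=(M_1,N_1)$, $w=(-N_1,M_1)$, the level-2 unit (with the same centre) has side vectors $v+w$, $v-w$; the level-3 unit is the level-1 unit doubled in size, and the level-4 unit is the level-2 unit doubled; the fabric's group is said to be based on the level-1 unit of area $M_1^2+N_1^2$. A quarter-turn centre is marked $\square$ if the quarter turn about it is a side-preserving symmetry and $\blacksquare$ if it becomes a symmetry only when composed with $\tau$. The subspecies are defined by the level of the $G_1$ lattice unit and the type of quarter-turn centres at its corners and centre: $39$: level 1, one of corners/centre $\square$ and the other $\blacksquare$; $36_1$: level 1, all $\blacksquare$; $36_2$: level 2, all $\blacksquare$, quarter-turn centres at cell corners; $36_s$: level 2, all $\blacksquare$, quarter-turn centres at cell centres; $34$: level 2, all $\square$; $38$: level 3, mixed $\square$ and $\blacksquare$; $33_3$: level 3, all $\square$; $35_3$: level 3, all $\blacksquare$; $33_4$: level 4, all $\square$; $35_4$: level 4, all $\blacksquare$; $37$: level 4, mixed $\square$ and $\blacksquare$. Colouring. A colouring assigns a colour to each strand; it is perfect if every symmetry of the fabric permutes colours coherently (whenever it maps one strand of colour $a$ to a strand of colour $b$, it maps every strand of colour $a$ to a strand of colour $b$). Thin striping with $p$ colours colours consecutive parallel strands periodically $c_1,c_2,\dots,c_p,c_1,\dots$ in each direction, using the same $p$ colours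 for warps and wefts (the orders of the colours in the two directions may differ). A cell is redundant if its warp and weft have the same colour. The $(5,3)$ satin is the order-5 design whose dark cells are the cells $(i,j)$ with $j\equiv 2i \pmod 5$ (equivalently each row is the previous row displaced by 2 or 3 cells); ''redundant cells arranged as the $(5,3)$ satin'' means the set of redundant cells is congruent to this set of dark cells. *)

(* Defs.v *)
From Stdlib Require Import ZArith Bool.
Open Scope Z_scope.

(** A design: [D i j = true] iff cell (i,j) is dark, i.e. the warp
    (vertical strand number i) is on top of the weft (horizontal strand
    number j) at their crossing, as seen from the obverse. *)
Definition design := Z -> Z -> bool.

Definition doubly_periodic (D : design) : Prop :=
  exists p, 0 < p /\ forall i j, D (i + p) j = D i j /\ D i (j + p) = D i j.

Inductive strand : Type := Warp (i : Z) | Weft (j : Z).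

Definition falls_apart (D : design) : Prop :=
  exists A : strand -> Prop, (exists s, A s) /\ (exists s, ~ A s) /\
    forall i j, (A (Warp i) -> ~ A (Weft j) -> D i j = true) /\
                (A (Weft j) -> ~ A (Warp i) -> D i j = false).

Definition is_fabric (D : design) : Prop :=
  doubly_periodic D /\ ~ falls_apart D.

(** Isometries of the plane mapping the set of strands onto itself,
    described by their (bijective) action on cells: cell (i,j) is sent to
    (s1 i + t1, s2 j + t2) if [swap] is false and to (s1 j + t1, s2 i + t2)
    if [swap] is true, where s_k = -1 if [negk] else 1.  (Cell centres
    sit at the integer points; linear parts are the 8 elements of D4.) *)
Record gmap : Type := GMap { g_swap : bool; g_neg1 : bool; g_neg2 : bool;
                             g_t1 : Z; g_t2 : Z }.

Definition sgn (b : bool) (x : Z) : Z := if b then - x else x.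

Definition gapp (g : gmap) (c : Z * Z) : Z * Z :=
  let (i, j) := c in
  if g_swap g then (sgn (g_neg1 g) j + g_t1 g, sgn (g_neg2 g) i + g_t2 g)
  else (sgn (g_neg1 g) i + g_t1 g, sgn (g_neg2 g) j + g_t2 g).

Definition gstrand (g : gmap) (s : strand) : strand :=
  match s with
  | Warp i => if g_swap g then Weft (sgn (g_neg2 g) i + g_t2 g)
              else Warp (sgn (g_neg1 g) i + g_t1 g)
  | Weft j => if g_swap g then Warp (sgn (g_neg1 g) j + g_t1 g)
              else Weft (sgn (g_neg2 g) j + g_t2 g)
  end.

(** Orientation-reversing (determinant -1): reflections and glide-reflections. *)
Definition reverses (g : gmap) : bool :=
  if g_swap g then Bool.eqb (g_neg1 g) (g_neg2 g)
  else negb (Bool.eqb (g_neg1 g) (g_neg2 g)).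

Definition is_quarter_turn (g : gmap) : bool :=
  g_swap g && negb (Bool.eqb (g_neg1 g) (g_neg2 g)).

(** (g, eps) is a symmetry of D; eps = true means composed with tau.
    The strand on top at c must be mapped to the strand on top at g c
    (eps = false), resp. to the strand underneath (eps = true).  Since g
    exchanges warps and wefts iff [g_swap g], this reads: *)
Definition is_sym (D : design) (g : gmap) (eps : bool) : Prop :=
  forall i j, D (fst (gapp g (i, j))) (snd (gapp g (i, j)))
              = xorb (D i j) (xorb (g_swap g) eps).

Definition isonemal (D : design) : Prop :=
  forall s s', exists g eps, is_sym D g eps /\ gstrand g s = s'.

Definition p4_type (D : design) : Prop :=
  (exists g eps, is_sym D g eps /\ is_quarter_turn g = true) /\
  (forall g eps, is_sym D g eps -> reverses g = false).

Definition transl (a b : Z) : gmap := GMap false false false a b.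

(** Quarter turn by +90 degrees about the point with DOUBLED coordinates
    (P1,P2) (cell (i,j) has centre (2i,2j), cell corners have odd doubled
    coordinates); meaningful when P1 + P2 is even. *)
Definition qturn (P1 P2 : Z) : gmap :=
  GMap true true false ((P1 + P2) / 2) ((P2 - P1) / 2).

(** Lattice unit of G1 with corner at doubled point (P1,P2) and sides
    v = (M,N), w = (-N,M).  Its centre, in doubled coordinates, is
    (P1,P2) + v + w. *)
Definition lu_centre (P1 P2 M N : Z) : Z * Z := (P1 + M - N, P2 + N + M).

Definition lattice_unit (D : design) (P1 P2 M N : Z) : Prop :=
  Z.even (P1 + P2) = true /\
  (forall a b, (exists eps, is_sym D (transl a b) eps) <->
               exists x y, a = x * M - y * N /\ b = x * N + y * M) /\
  (exists eps, is_sym D (qturn P1 P2) eps) /\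
  (exists eps, is_sym D (qturn (fst (lu_centre P1 P2 M N))
                               (snd (lu_centre P1 P2 M N))) eps).

Definition level1 (M N : Z) : Prop := Z.gcd M N = 1 /\ Z.odd M <> Z.odd N.

Inductive level : Type := L1 | L2 | L3 | L4.

(** Side vector of the level-L unit derived from the level-1 unit with
    sides (M1,N1), (-N1,M1). *)
Definition lbase (L : level) (M1 N1 : Z) : Z * Z :=
  match L with
  | L1 => (M1, N1)
  | L2 => (M1 - N1, M1 + N1)
  | L3 => (2 * M1, 2 * N1)
  | L4 => (2 * (M1 - N1), 2 * (M1 + N1))
  end.

Definition has_level (L : level) (M N : Z) : Prop :=
  exists M1 N1, level1 M1 N1 /\ (M, N) = lbase L M1 N1.

Inductive subspecies : Type :=
  S33_3 | S33_4 | S34 | S35_3 | S35_4 | S36_1 | S36_2 | S36_s | S37 | S38 | S39.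

(** Defining conditions; eP / eQ : type of corner / centre quarter-turn
    centres (false = white square, side-preserving; true = black square,
    composed with tau); [corner] : the corner lies at a cell corner. *)
Definition subspecies_cond (S : subspecies) (L : level) (eP eQ corner : bool)
  : Prop :=
  match S with
  | S39   => L = L1 /\ eP <> eQ
  | S36_1 => L = L1 /\ eP = true /\ eQ = true
  | S36_2 => L = L2 /\ eP = true /\ eQ = true /\ corner = true
  | S36_s => L = L2 /\ eP = true /\ eQ = true /\ corner = false
  | S34   => L = L2 /\ eP = false /\ eQ = false
  | S38   => L = L3 /\ eP <> eQ
  | S33_3 => L = L3 /\ eP = false /\ eQ = false
  | S35_3 => L = L3 /\ eP = true /\ eQ = true
  | S33_4 => L = L4 /\ eP = false /\ eQ = false
  | S35_4 => L = L4 /\ eP = true /\ eQ = true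
  | S37   => L = L4 /\ eP <> eQ
  end.

Definition in_subspecies (D : design) (S : subspecies) : Prop :=
  is_fabric D /\ isonemal D /\ p4_type D /\
  exists P1 P2 M N L eP eQ,
    lattice_unit D P1 P2 M N /\ has_level L M N /\
    is_sym D (qturn P1 P2) eP /\
    is_sym D (qturn (fst (lu_centre P1 P2 M N)) (snd (lu_centre P1 P2 M N))) eQ /\
    subspecies_cond S L eP eQ (Z.odd P1).

Definition has_period (f : Z -> bool) (p : Z) : Prop := forall k, f (k + p) = f k.

Definition min_period (f : Z -> bool) (n : Z) : Prop :=
  0 < n /\ has_period f n /\ forall m, 0 < m < n -> ~ has_period f m.

Definition has_order (D : design) (n : Z) : Prop :=
  (forall i, min_period (fun j => D i j) n) /\
  (forall j, min_period (fun i => D i j) n).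

Definition based_on_area (D : design) (a : Z) : Prop :=
  exists P1 P2 M N L M1 N1,
    lattice_unit D P1 P2 M N /\ level1 M1 N1 /\ (M, N) = lbase L M1 N1 /\
    M1 * M1 + N1 * N1 = a.

Definition colouring := strand -> Z.

Definition perfect (D : design) (col : colouring) : Prop :=
  forall g eps, is_sym D g eps ->
    forall s s', col s = col s' -> col (gstrand g s) = col (gstrand g s').

Definition perm_on (p : Z) (f : Z -> Z) : Prop :=
  (forall k, 0 <= k < p -> 0 <= f k < p) /\
  (forall k l, 0 <= k < p -> 0 <= l < p -> f k = f l -> k = l).

Definition thin_striping (p : Z) (col : colouring) : Prop :=
  exists sigma rho, perm_on p sigma /\ perm_on p rho /\
    (forall i, col (Warp i) = sigma (i mod p)) /\
    (forall j, col (Weft j) = rho (j mod p)).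

Definition redundant (col : colouring) (i j : Z) : Prop :=
  col (Warp i) = col (Weft j).

Definition satin53 (i j : Z) : Prop := (j - 2 * i) mod 5 = 0.

Definition redundant_as_satin53 (col : colouring) : Prop :=
  exists g : gmap, forall i j,
    redundant col i j <-> exists i' j', satin53 i' j' /\ gapp g (i', j') = (i, j).

(* Main.v *)
Require Import Defs.
From Stdlib Require Import ZArith Bool List Lia Classical.
Import ListNotations.
Open Scope Z_scope.

Ltac zm := Z.div_mod_to_equations; lia.


Lemma sq5 M1 N1 : M1*M1 + N1*N1 = 5 ->
  (M1 = 1 \/ M1 = -1 \/ M1 = 2 \/ M1 = -2) /\ (N1 = 1 \/ N1 = -1 \/ N1 = 2 \/ N1 = -2).
Proof. intros H. assert (-2 <= M1 <= 2) by nia. assert (-2 <= N1 <= 2) by nia.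
  assert (M1 <> 0) by (intro; subst; nia). assert (N1 <> 0) by (intro; subst; nia). lia. Qed.

Lemma lat_k L M1 N1 M N : M1*M1+N1*N1 = 5 -> (M,N) = lbase L M1 N1 ->
  exists k, (k = 2 \/ k = 3) /\ (N - k*M) mod 5 = 0 /\ (M + k*N) mod 5 = 0.
Proof.
  intros H5 HL. pose proof (sq5 _ _ H5) as [HM HN].
  destruct HM as [ -> | [ -> | [ -> | -> ] ] ]; destruct HN as [ -> | [ -> | [ -> | -> ] ] ]; try discriminate;
  destruct L; simpl in HL; inversion HL; subst;
  first [ exists 2; split; [lia | split; reflexivity]
        | exists 3; split; [lia | split; reflexivity] ].
Qed.

Lemma trans_cong k M N a b : (N - k*M) mod 5 = 0 -> (M + k*N) mod 5 = 0 ->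
  (exists x y, a = x * M - y * N /\ b = x * N + y * M) -> (b - k*a) mod 5 = 0.
Proof.
  intros H1 H2 [x [y [-> ->]]].
  apply Z.mod_divide in H1; [|lia]. apply Z.mod_divide in H2; [|lia].
  destruct H1 as [u Hu]. destruct H2 as [w Hw].
  apply Z.mod_divide; [lia|]. exists (x*u + y*w).
  transitivity (x*(N - k*M) + y*(M + k*N)); [ring|]. rewrite Hu, Hw; ring.
Qed.

Lemma universal D P1 P2 M N L M1 N1 :
  lattice_unit D P1 P2 M N -> (M,N) = lbase L M1 N1 -> M1*M1+N1*N1 = 5 ->
  (forall g eps, is_sym D g eps -> reverses g = false) ->
  exists col, thin_striping 5 col /\ perfect D col /\ redundant_as_satin53 col.
Proof.
  intros [_ [Htr [[e0 Hq] _]]] HL H5 Hrev.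
  destruct (lat_k _ _ _ _ _ H5 HL) as [k [Hk [HkN HkM]]].
  assert (Hcong : forall a b eps, is_sym D (transl a b) eps -> (b - k*a) mod 5 = 0).
  { intros a b eps H. apply (trans_cong k M N); auto. apply Htr. eauto. }
  clear Htr HL H5 HkN HkM.
  unfold qturn in Hq. remember ((P1 + P2) / 2) as a1. remember ((P2 - P1)/2) as a2.
  clear Heqa1 Heqa2.
  unfold is_sym in Hq; simpl in Hq.
  set (c := if k =? 2 then 2*a1 + 4*a2 else 4*a1 + 2*a2).
  assert (Hc : (k = 2 /\ c = 2*a1+4*a2) \/ (k = 3 /\ c = 4*a1+2*a2)).
  { unfold c; destruct Hk as [ -> | -> ]; simpl; auto. }
  clearbody c.
  exists (fun s => match s with Warp i => i mod 5 | Weft j => ((5-k)*(j - c)) mod 5 end).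
  split; [|split].
  - exists (fun x => x), (fun x => ((5-k)*(x - c)) mod 5).
    split; [|split; [|split]].
    + split; intros; lia.
    + split.
      * intros; apply Z.mod_pos_bound; lia.
      * intros x y Hx Hy E. destruct Hc as [ [ -> ? ] | [ -> ? ] ]; zm.
    + intros i; reflexivity.
    + intros j. destruct Hc as [ [ -> ? ] | [ -> ? ] ]; zm.
  - intros g eps Hg s s' Hss.
    pose proof (Hrev g eps Hg) as Hr.
    destruct g as [sw n1 n2 t1 t2].
    destruct sw, n1, n2; simpl in Hr; try discriminate.
    + (* T T F : quarter turn (i,j) -> (-j+t1, i+t2) *)
      assert (Ht : ((t2 - a2) - k*(t1 - a1)) mod 5 = 0).
      { apply (Hcong _ _ (xorb e0 eps)). unfold is_sym in *; simpl in *. intros i j.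
        pose proof (Hq i j) as E1.
        pose proof (Hq (-j+a1) (i+a2)) as E2.
        pose proof (Hq (-(i+a2)+a1) ((-j+a1)+a2)) as E3.
        pose proof (Hg (-((-j+a1)+a2)+a1) ((-(i+a2)+a1)+a2)) as E4.
        replace (i + (t1 - a1)) with (- ((- (i + a2) + a1) + a2) + t1) by ring.
        replace (j + (t2 - a2)) with ((- ((-j+a1)+a2) + a1) + t2) by ring.
        rewrite E4, E3, E2, E1. destruct (D i j), e0, eps; reflexivity. }
      destruct Hc as [ [ -> ? ] | [ -> ? ] ]; destruct s, s'; cbn [gstrand sgn g_swap g_neg1 g_neg2 g_t1 g_t2] in *; zm.
    + (* T F T : (i,j) -> (j+t1, -i+t2) *)
      assert (Ht : ((t2 - a1) - k*(t1 + a2)) mod 5 = 0).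
      { apply (Hcong _ _ (xorb e0 eps)). unfold is_sym in *; simpl in *. intros i j.
        pose proof (Hq i j) as E1.
        pose proof (Hg (-j+a1) (i+a2)) as E2.
        replace (i + (t1 + a2)) with ((i + a2) + t1) by ring.
        replace (j + (t2 - a1)) with (- (-j+a1) + t2) by ring.
        rewrite E2, E1. destruct (D i j), e0, eps; reflexivity. }
      destruct Hc as [ [ -> ? ] | [ -> ? ] ]; destruct s, s'; cbn [gstrand sgn g_swap g_neg1 g_neg2 g_t1 g_t2] in *; zm.
    + (* F T T : (i,j) -> (-i+t1, -j+t2) *)
      assert (Ht : ((t2 - a1 - a2) - k*(t1 - a1 + a2)) mod 5 = 0).
      { apply (Hcong _ _ eps). unfold is_sym in *; simpl in *. intros i j.
        pose proof (Hq i j) as E1.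
        pose proof (Hq (-j+a1) (i+a2)) as E2.
        pose proof (Hg (-(i+a2)+a1) ((-j+a1)+a2)) as E3.
        replace (i + (t1 - a1 + a2)) with (- (-(i+a2)+a1) + t1) by ring.
        replace (j + (t2 - a1 - a2)) with (- ((-j+a1)+a2) + t2) by ring.
        rewrite E3, E2, E1. destruct (D i j), e0, eps; reflexivity. }
      destruct Hc as [ [ -> ? ] | [ -> ? ] ]; destruct s, s'; cbn [gstrand sgn g_swap g_neg1 g_neg2 g_t1 g_t2] in *; zm.
    + (* F F F : translation *)
      assert (Ht : (t2 - k*t1) mod 5 = 0) by exact (Hcong _ _ _ Hg).
      destruct Hc as [ [ -> ? ] | [ -> ? ] ]; destruct s, s'; cbn [gstrand sgn g_swap g_neg1 g_neg2 g_t1 g_t2] in *; zm.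
  - destruct Hc as [ [ -> ? ] | [ -> ? ] ].
    + exists (GMap false false false 0 c). intros i j. unfold redundant; cbn [gapp sgn g_swap g_neg1 g_neg2 g_t1 g_t2 fst snd].
      split.
      * intros E. exists i, (j - c). split; [unfold satin53; zm|].
        f_equal; ring.
      * intros [i' [j' [Hs E]]]. injection E as E1 E2; subst. unfold satin53 in Hs. zm.
    + exists (GMap false true false 0 c). intros i j. unfold redundant; cbn [gapp sgn g_swap g_neg1 g_neg2 g_t1 g_t2 fst snd].
      split.
      * intros E. exists (-i), (j - c). split; [unfold satin53; zm|].
        f_equal; ring.
      * intros [i' [j' [Hs E]]]. injection E as E1 E2; subst. unfold satin53 in Hs. zm.
Qed.



Definition zl (p : Z) : list Z := map Z.of_nat (seq 0 (Z.to_nat p)).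

Lemma zl_in p x : 0 <= x < p -> In x (zl p).
Proof.
  intros H. unfold zl. apply in_map_iff. exists (Z.to_nat x). split; [lia|].
  apply in_seq. lia.
Qed.

Lemma in_zl p x : In x (zl p) -> 0 <= x < p.
Proof.
  unfold zl. intros H. apply in_map_iff in H. destruct H as [k [<- Hk]].
  apply in_seq in Hk. lia.
Qed.

Lemma forallb_zl (f : Z -> bool) p x : forallb f (zl p) = true -> 0 <= x < p -> f x = true.
Proof. intros H Hx. rewrite forallb_forall in H. apply H, zl_in, Hx. Qed.

Definition per (D : design) (p : Z) : Prop := forall x y, D x y = D (x mod p) (y mod p).

Lemma modeq_ex p a b : 0 < p -> a mod p = b mod p -> exists k, a = b + k * p.
Proof. intros Hp H. exists (a / p - b / p).
 pose proof (Z_div_mod_eq_full a p). pose proof (Z_div_mod_eq_full b p).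
 rewrite H in *. lia. Qed.

Lemma ex_modeq p a b k : 0 < p -> a = b + k * p -> a mod p = b mod p.
Proof. intros Hp ->. apply Z_mod_plus_full. Qed.

Lemma per_congr D p x y x' y' : per D p -> x mod p = x' mod p -> y mod p = y' mod p ->
  D x y = D x' y'.
Proof. intros H Hx Hy. rewrite (H x y), (H x' y'), Hx, Hy. reflexivity. Qed.

Lemma sgn_mod p b x x' t t' : 0 < p -> x mod p = x' mod p -> t mod p = t' mod p ->
  (sgn b x + t) mod p = (sgn b x' + t') mod p.
Proof.
  intros Hp Hx Ht. destruct (modeq_ex p _ _ Hp Hx) as [k Hk].
  destruct (modeq_ex p _ _ Hp Ht) as [k' Hk'].
  destruct b; simpl.
  - apply ex_modeq with (-k + k'); lia.
  - apply ex_modeq with (k + k'); lia.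
Qed.

Lemma sym_congr D p sw n1 n2 t1 t2 t1' t2' eps : per D p -> 0 < p ->
  t1 mod p = t1' mod p -> t2 mod p = t2' mod p ->
  is_sym D (GMap sw n1 n2 t1 t2) eps -> is_sym D (GMap sw n1 n2 t1' t2') eps.
Proof.
  intros Hper Hp H1 H2 H i j. specialize (H i j). simpl in *. rewrite <- H.
  destruct sw; simpl; apply (per_congr D p); auto; apply sgn_mod; auto.
Qed.

Fixpoint fa {A : Type} (f : A -> bool) (l : list A) : bool :=
  match l with [] => true | x :: r => if f x then fa f r else false end.

Lemma fa_eq {A : Type} (f : A -> bool) l : fa f l = forallb f l.
Proof. induction l as [|x l IH]; simpl; [reflexivity|]. destruct (f x); simpl; auto. Qed.

Definition sym_check (D : design) (p : Z) (g : gmap) (eps : bool) : bool :=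
  fa (fun i => fa (fun j =>
    Bool.eqb (D (fst (gapp g (i, j))) (snd (gapp g (i, j))))
             (xorb (D i j) (xorb (g_swap g) eps))) (zl p)) (zl p).

Lemma mod_range p x : 0 < p -> 0 <= x mod p < p.
Proof. intros; apply Z.mod_pos_bound; lia. Qed.

Lemma sym_check_sound D p g eps : per D p -> 0 < p -> sym_check D p g eps = true -> is_sym D g eps.
Proof.
  intros Hper Hp H i j. unfold sym_check in H. rewrite fa_eq in H.
  pose proof (forallb_zl _ _ (i mod p) H (mod_range p i Hp)) as H'. cbv beta in H'.
  rewrite fa_eq in H'.
  pose proof (forallb_zl _ _ (j mod p) H' (mod_range p j Hp)) as H''. cbv beta in H''.
  apply Bool.eqb_prop in H''.
  rewrite (Hper i j).
  rewrite <- H''. destruct g as [sw n1 n2 t1 t2]. simpl.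
  destruct sw; simpl; apply (per_congr D p); auto; apply sgn_mod; auto;
    rewrite Z.mod_mod; lia.
Qed.

Lemma sym_check_complete D p g eps : is_sym D g eps -> sym_check D p g eps = true.
Proof.
  intros H. unfold sym_check. rewrite fa_eq. apply forallb_forall. intros i _.
  rewrite fa_eq. apply forallb_forall. intros j _. rewrite (H i j). apply Bool.eqb_reflx.
Qed.

Definition Lat (M N a b : Z) : Prop := exists x y, a = x * M - y * N /\ b = x * N + y * M.

Definition inlatb (M N a b : Z) : bool :=
  ((a*M + b*N) mod (M*M+N*N) =? 0) && ((b*M - a*N) mod (M*M+N*N) =? 0).

Lemma inlatb_iff M N a b : 0 < M*M+N*N -> (inlatb M N a b = true <-> Lat M N a b).
Proof.
  intros HA. unfold inlatb. rewrite andb_true_iff, !Z.eqb_eq.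
  rewrite !Z.mod_divide by lia. split.
  - intros [[x Hx] [y Hy]]. exists x, y. split.
    + apply (Z.mul_cancel_l _ _ (M*M+N*N)); [lia|].
      transitivity (M*(a*M+b*N) - N*(b*M-a*N)); [ring|]. rewrite Hx, Hy. ring.
    + apply (Z.mul_cancel_l _ _ (M*M+N*N)); [lia|].
      transitivity (N*(a*M+b*N) + M*(b*M-a*N)); [ring|]. rewrite Hx, Hy. ring.
  - intros [x [y [-> ->]]]. split; [exists x | exists y]; ring.
Qed.

Lemma Lat_add M N a b c d : Lat M N a b -> Lat M N c d -> Lat M N (a + c) (b + d).
Proof. intros [x [y [-> ->]]] [x' [y' [-> ->]]]. exists (x+x'), (y+y'). split; ring. Qed.
Lemma Lat_scale M N a b u : Lat M N a b -> Lat M N (u*a) (u*b).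
Proof. intros [x [y [-> ->]]]. exists (u*x), (u*y). split; ring. Qed.

Lemma Lat_mod M N p a b : 0 < p -> Lat M N p 0 -> Lat M N 0 p ->
  (Lat M N a b <-> Lat M N (a mod p) (b mod p)).
Proof.
  intros Hp H1 H2.
  assert (Ea : a = a mod p + (a/p)*p + 0) by (pose proof (Z_div_mod_eq_full a p); lia).
  assert (Eb : b = b mod p + 0 + (b/p)*p) by (pose proof (Z_div_mod_eq_full b p); lia).
  split; intros H.
  - pose proof (Lat_scale _ _ _ _ (-(a/p)) H1) as K1.
    pose proof (Lat_scale _ _ _ _ (-(b/p)) H2) as K2.
    pose proof (Lat_add _ _ _ _ _ _ (Lat_add _ _ _ _ _ _ H K1) K2) as K.
    replace (a mod p) with (a + -(a/p)*p + -(b/p)*0) by lia.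
    replace (b mod p) with (b + -(a/p)*0 + -(b/p)*p) by lia. exact K.
  - pose proof (Lat_scale _ _ _ _ (a/p) H1) as K1.
    pose proof (Lat_scale _ _ _ _ (b/p) H2) as K2.
    pose proof (Lat_add _ _ _ _ _ _ (Lat_add _ _ _ _ _ _ H K1) K2) as K.
    rewrite Ea at 1. rewrite Eb at 1.
    replace (a mod p + a / p * p + 0) with (a mod p + a/p*p + b/p*0) by lia.
    replace (b mod p + 0 + b / p * p) with (b mod p + a/p*0 + b/p*p) by lia. exact K.
Qed.

Definition lat_check D p M N : bool :=
  forallb (fun a => forallb (fun b =>
    Bool.eqb (sym_check D p (transl a b) true || sym_check D p (transl a b) false)
             (inlatb M N a b)) (zl p)) (zl p).

Lemma lat_check_ok D p M N : per D p -> 0 < p -> 0 < M*M+N*N ->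
  inlatb M N p 0 = true -> inlatb M N 0 p = true -> lat_check D p M N = true ->
  forall a b, (exists eps, is_sym D (transl a b) eps) <->
              exists x y, a = x * M - y * N /\ b = x * N + y * M.
Proof.
  intros Hper Hp HA H1 H2 H a b.
  apply (inlatb_iff M N) in H1; auto. apply (inlatb_iff M N) in H2; auto.
  change (exists x y, a = x * M - y * N /\ b = x * N + y * M) with (Lat M N a b).
  rewrite (Lat_mod M N p a b Hp H1 H2).
  pose proof (forallb_zl _ _ (a mod p) H (mod_range p a Hp)) as H'. simpl in H'.
  pose proof (forallb_zl _ _ (b mod p) H' (mod_range p b Hp)) as H''. simpl in H''.
  apply Bool.eqb_prop in H''. rewrite <- inlatb_iff by auto. rewrite <- H''.
  split.
  - intros [eps Hs]. unfold transl in Hs.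
    apply (sym_congr D p _ _ _ _ _ (a mod p) (b mod p)) in Hs; auto;
      try (rewrite Z.mod_mod; lia).
    apply sym_check_complete with (p := p) in Hs. destruct eps; unfold transl; rewrite Hs;
    [reflexivity| apply orb_true_r].
  - intros Ho. apply orb_true_iff in Ho.
    destruct Ho as [Ho|Ho]; apply sym_check_sound in Ho; auto;
    [exists true | exists false]; unfold transl in *;
    apply (sym_congr D p _ _ _ _ _ a b) in Ho; auto; rewrite Z.mod_mod; lia.
Qed.

Definition bools := [true; false].

Definition rev_check D p : bool :=
  forallb (fun sw => forallb (fun n1 => forallb (fun n2 =>
    if reverses (GMap sw n1 n2 0 0) then
      forallb (fun t1 => forallb (fun t2 => forallb (fun eps =>
        negb (sym_check D p (GMap sw n1 n2 t1 t2) eps)) bools) (zl p)) (zl p)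
    else true) bools) bools) bools.

Lemma forallb_bools f b : forallb f bools = true -> f b = true.
Proof. simpl. destruct b; intros H; apply andb_true_iff in H; destruct H as [H1 H2];
  [exact H1| apply andb_true_iff in H2; apply H2]. Qed.

Lemma rev_check_ok D p : per D p -> 0 < p -> rev_check D p = true ->
  forall g eps, is_sym D g eps -> reverses g = false.
Proof.
  intros Hper Hp H [sw n1 n2 t1 t2] eps Hs.
  pose proof (forallb_bools _ sw H) as H1. cbv beta in H1.
  pose proof (forallb_bools _ n1 H1) as H2. cbv beta in H2.
  pose proof (forallb_bools _ n2 H2) as H3. cbv beta in H3.
  change (reverses (GMap sw n1 n2 t1 t2)) with (reverses (GMap sw n1 n2 0 0)).
  destruct (reverses (GMap sw n1 n2 0 0)); [|reflexivity].
  apply (sym_congr D p _ _ _ _ _ (t1 mod p) (t2 mod p)) in Hs; auto; try (rewrite Z.mod_mod; lia).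
  apply sym_check_complete with (p := p) in Hs.
  pose proof (forallb_zl _ _ (t1 mod p) H3 (mod_range p t1 Hp)) as H4. cbv beta in H4.
  pose proof (forallb_zl _ _ (t2 mod p) H4 (mod_range p t2 Hp)) as H5. cbv beta in H5.
  pose proof (forallb_bools _ eps H5) as H6. cbv beta in H6. rewrite Hs in H6. discriminate.
Qed.


Definition node := (bool * Z)%type.
Definition edge (D : design) (x y : node) : bool :=
  let (b, r) := x in let (b', r') := y in
  if b then negb b' && negb (D r r') else b' && D r' r.
Definition res (p : Z) (s : strand) : node :=
  match s with Warp i => (true, i mod p) | Weft j => (false, j mod p) end.
Definition inrange (p : Z) (x : node) : bool := (0 <=? snd x) && (snd x <? p).
Definition node_eqb (x y : node) : bool := Bool.eqb (fst x) (fst y) && (snd x =? snd y).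
Definition nodes (p : Z) : list node :=
  map (fun r => (true, r)) (zl p) ++ map (fun r => (false, r)) (zl p).

Fixpoint fwd_ok D (seen rest : list node) : bool :=
  match rest with
  | [] => true
  | y :: r => existsb (fun x => edge D x y) seen && fwd_ok D (y :: seen) r
  end.
Fixpoint bwd_ok D (seen rest : list node) : bool :=
  match rest with
  | [] => true
  | y :: r => existsb (fun x => edge D y x) seen && bwd_ok D (y :: seen) r
  end.

Definition hang_check D p (root : node) (fl bl : list node) : bool :=
  inrange p root && forallb (inrange p) fl && forallb (inrange p) bl &&
  fwd_ok D [root] fl && bwd_ok D [root] bl &&
  forallb (fun y => existsb (node_eqb y) (root :: fl)) (nodes p) &&
  forallb (fun y => existsb (node_eqb y) (root :: bl)) (nodes p) &&
  forallb (fun y => existsb (fun x => edge D x y) (nodes p)) (nodes p).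

Lemma node_eqb_eq x y : node_eqb x y = true -> x = y.
Proof. destruct x, y; unfold node_eqb; simpl. rewrite andb_true_iff, Z.eqb_eq.
  intros [H1 H2]. apply Bool.eqb_prop in H1. subst; reflexivity. Qed.

Lemma res_nodes p s : 0 < p -> In (res p s) (nodes p).
Proof. intros Hp. unfold nodes. apply in_or_app. destruct s; simpl;
  [left|right]; apply in_map; apply zl_in, mod_range; auto. Qed.

Lemma existsb_eq_in y l : existsb (node_eqb y) l = true -> In y l.
Proof. intros H. apply existsb_exists in H. destruct H as [x [Hx E]].
  apply node_eqb_eq in E. subst; auto. Qed.

Lemma hang_ok D p root fl bl : per D p -> 0 < p -> hang_check D p root fl bl = true ->
  ~ falls_apart D.
Proof.
  intros Hper Hp H. unfold hang_check in H. rewrite !andb_true_iff in H.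
  destruct H as [[[[[[[Hr Hfr] Hbr] Hf] Hb] Hcf] Hcb] Hin].
  intros [A [[s HAs] [[s' HnA] Hlift]]].
  set (Ex := fun x => exists s, A s /\ res p s = x).
  set (Rs := fun x => forall s, res p s = x -> A s).
  assert (key : forall x y, Ex x -> edge D x y = true -> Rs y).
  { intros [b r] [b' r'] [s0 [HA0 Hres0]] E s1 Hs1.
    destruct s0 as [i|j]; simpl in Hres0; injection Hres0 as <- <-; simpl in E.
    - destruct b'; simpl in E; [discriminate|].
      destruct s1 as [i1|j1]; simpl in Hs1; [discriminate|]. injection Hs1 as Hj.
      destruct (classic (A (Weft j1))) as [|Hn]; auto. exfalso.
      destruct (Hlift i j1) as [H1 _]. specialize (H1 HA0 Hn).
      rewrite Hper, Hj in H1. rewrite H1 in E. discriminate.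
    - destruct b'; simpl in E; [|discriminate].
      destruct s1 as [i1|j1]; simpl in Hs1; [|discriminate]. injection Hs1 as Hi.
      destruct (classic (A (Warp i1))) as [|Hn]; auto. exfalso.
      destruct (Hlift i1 j) as [_ H1]. specialize (H1 HA0 Hn).
      rewrite Hper, Hi in H1. rewrite H1 in E. discriminate. }
  assert (RE : forall x, inrange p x = true -> Rs x -> Ex x).
  { intros [b r] Hx HR. unfold inrange in Hx; simpl in Hx.
    rewrite andb_true_iff, Z.leb_le, Z.ltb_lt in Hx.
    destruct b; [exists (Warp r) | exists (Weft r)]; split; try apply HR;
      simpl; rewrite Z.mod_small; auto. }
  assert (FW : forall rest seen, fwd_ok D seen rest = true -> forallb (inrange p) rest = true ->
            (forall x, In x seen -> Ex x) -> forall y, In y rest -> Ex y).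
  { induction rest as [|z rest IH]; intros seen H1 H2 H3 y Hy; [destruct Hy|].
    simpl in H1, H2. rewrite andb_true_iff in H1, H2. destruct H1 as [E1 E2], H2 as [R1 R2].
    assert (Ez : Ex z).
    { apply existsb_exists in E1. destruct E1 as [x [Hx Ex1]]. apply RE; auto.
      apply (key x); auto. }
    destruct Hy as [<-|Hy]; auto.
    apply (IH (z :: seen)); auto. intros x [<-|Hx]; auto. }
  assert (BW : forall rest seen, bwd_ok D seen rest = true -> forallb (inrange p) rest = true ->
            forallb (inrange p) seen = true ->
            (forall x, In x seen -> Ex x -> Ex root) -> forall y, In y rest -> Ex y -> Ex root).
  { induction rest as [|z rest IH]; intros seen H1 H2 H2' H3 y Hy; [destruct Hy|]. revert Hy.
    simpl in H1, H2. rewrite andb_true_iff in H1, H2. destruct H1 as [E1 E2], H2 as [R1 R2].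
    assert (Ez : Ex z -> Ex root).
    { intros Hz. apply existsb_exists in E1. destruct E1 as [x [Hx Ex1]].
      apply (H3 x Hx). apply RE.
      - rewrite forallb_forall in H2'. auto.
      - apply (key z); auto. }
    intros Hy. destruct Hy as [<-|Hy]; [exact Ez|].
    intros Hey.
    assert (S1 : forallb (inrange p) (z :: seen) = true) by (simpl; rewrite R1, H2'; reflexivity).
    assert (S2 : forall x, In x (z :: seen) -> Ex x -> Ex root) by (intros x Hx; destruct Hx as [E|Hx]; [rewrite <- E; exact Ez | exact (H3 x Hx)]).
    exact (IH (z :: seen) E2 R2 S1 S2 y Hy Hey). }
  assert (Eroot : Ex root).
  { assert (Hs : In (res p s) (root :: bl)).
    { rewrite forallb_forall in Hcb. apply existsb_eq_in, Hcb, res_nodes; auto. }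
    assert (Es : Ex (res p s)) by (exists s; auto).
    destruct Hs as [Hs|Hs]; [rewrite Hs; auto|].
    refine (BW bl [root] Hb Hbr _ _ (res p s) Hs Es).
    - simpl. rewrite Hr. reflexivity.
    - intros x Hx Hex. destruct Hx as [E|[]]. rewrite E. exact Hex. }
  assert (Eall : forall y, In y (nodes p) -> Ex y).
  { intros y Hy. rewrite forallb_forall in Hcf. apply Hcf, existsb_eq_in in Hy.
    destruct Hy as [<-|Hy]; auto.
    refine (FW fl [root] Hf Hfr _ y Hy).
    intros x Hx. destruct Hx as [E|[]]. rewrite <- E. exact Eroot. }
  apply HnA. rewrite forallb_forall in Hin.
  pose proof (Hin _ (res_nodes p s' Hp)) as E. apply existsb_exists in E.
  destruct E as [x [Hx Exy]]. apply (key x (res p s')); auto.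
Qed.


Definition ginv (g : gmap) : gmap :=
  match g with GMap sw n1 n2 t1 t2 =>
    if sw then GMap true n2 n1 (- sgn n2 t2) (- sgn n1 t1)
    else GMap false n1 n2 (- sgn n1 t1) (- sgn n2 t2) end.

Definition comp (g h : gmap) : gmap :=
  GMap (xorb (g_swap g) (g_swap h))
       (xorb (g_neg1 g) (if g_swap g then g_neg2 h else g_neg1 h))
       (xorb (g_neg2 g) (if g_swap g then g_neg1 h else g_neg2 h))
       (fst (gapp g (gapp h (0,0)))) (snd (gapp g (gapp h (0,0)))).

Lemma gapp_inv g c : gapp g (gapp (ginv g) c) = c.
Proof. destruct g as [[] [] [] t1 t2], c as [i j]; simpl; f_equal; ring. Qed.

Lemma gapp_comp g h c : gapp (comp g h) c = gapp g (gapp h c).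
Proof. destruct g as [[] [] [] t1 t2], h as [[] [] [] u1 u2], c as [i j]; simpl; f_equal; ring. Qed.

Lemma gstrand_inv g s : gstrand (ginv g) (gstrand g s) = s.
Proof. destruct g as [[] [] [] t1 t2], s as [i|j]; simpl; f_equal; ring. Qed.

Lemma gstrand_comp g h s : gstrand (comp g h) s = gstrand g (gstrand h s).
Proof. destruct g as [[] [] [] t1 t2], h as [[] [] [] u1 u2], s as [i|j]; simpl; f_equal; ring. Qed.

Lemma swap_inv g : g_swap (ginv g) = g_swap g.
Proof. destruct g as [[] [] [] t1 t2]; reflexivity. Qed.

Lemma sym_inv D g eps : is_sym D g eps -> is_sym D (ginv g) eps.
Proof.
  unfold is_sym. intros H i j.
  pose proof (H (fst (gapp (ginv g) (i,j))) (snd (gapp (ginv g) (i,j)))) as E.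
  rewrite <- surjective_pairing, gapp_inv in E. cbn [fst snd] in E.
  rewrite swap_inv, E. generalize (D (fst (gapp (ginv g) (i, j))) (snd (gapp (ginv g) (i, j)))).
  intros b. destruct b, (g_swap g), eps; reflexivity.
Qed.

Lemma sym_comp D g h e1 e2 : is_sym D g e1 -> is_sym D h e2 -> is_sym D (comp g h) (xorb e1 e2).
Proof.
  unfold is_sym. intros Hg Hh i j. rewrite gapp_comp.
  pose proof (Hg (fst (gapp h (i,j))) (snd (gapp h (i,j)))) as E.
  rewrite <- surjective_pairing in E. rewrite E, Hh. unfold comp; cbn [g_swap].
  destruct (D i j), (g_swap g), (g_swap h), e1, e2; reflexivity.
Qed.

Definition strand_eqb (s t : strand) : bool :=
  match s, t with Warp i, Warp j => i =? j | Weft i, Weft j => i =? j | _, _ => false end.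

Definition iso_check D p (tbl : list (gmap * bool)) : bool :=
  forallb (fun ge => sym_check D p (fst ge) (snd ge)) tbl &&
  forallb (fun r => existsb (fun ge => strand_eqb (gstrand (fst ge) (Warp 0)) (Warp r)) tbl &&
                    existsb (fun ge => strand_eqb (gstrand (fst ge) (Warp 0)) (Weft r)) tbl) (zl p).

Lemma iso_ok D p tbl : per D p -> 0 < p -> iso_check D p tbl = true -> isonemal D.
Proof.
  intros Hper Hp H. unfold iso_check in H. rewrite andb_true_iff in H. destruct H as [H1 H2].
  rewrite forallb_forall in H1.
  assert (R : forall s', exists g eps, is_sym D g eps /\ gstrand g (Warp 0) = s').
  { intros s'.
    destruct s' as [i|j].
    - pose proof (forallb_zl _ _ (i mod p) H2 (mod_range p i Hp)) as E. cbv beta in E.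
      rewrite andb_true_iff in E. destruct E as [E _]. apply existsb_exists in E.
      destruct E as [[[sw n1 n2 t1 t2] e] [Hin Heq]].
      pose proof (H1 _ Hin) as Hs. simpl in Hs. apply sym_check_sound in Hs; auto.
      destruct sw; simpl in Heq; [discriminate|]. apply Z.eqb_eq in Heq.
      exists (GMap false n1 n2 (t1 + (i - i mod p)) t2), e. split.
      + apply (sym_congr D p _ _ _ t1 t2); auto.
        apply ex_modeq with (-(i/p)); auto. pose proof (Z_div_mod_eq_full i p). lia.
      + simpl. f_equal. destruct n1; simpl in *; lia.
    - pose proof (forallb_zl _ _ (j mod p) H2 (mod_range p j Hp)) as E. cbv beta in E.
      rewrite andb_true_iff in E. destruct E as [_ E]. apply existsb_exists in E.
      destruct E as [[[sw n1 n2 t1 t2] e] [Hin Heq]].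
      pose proof (H1 _ Hin) as Hs. simpl in Hs. apply sym_check_sound in Hs; auto.
      destruct sw; simpl in Heq; [|discriminate]. apply Z.eqb_eq in Heq.
      exists (GMap true n1 n2 t1 (t2 + (j - j mod p))), e. split.
      + apply (sym_congr D p _ _ _ t1 t2); auto.
        apply ex_modeq with (-(j/p)); auto. pose proof (Z_div_mod_eq_full j p). lia.
      + simpl. f_equal. destruct n2; simpl in *; lia. }
  intros s s'. destruct (R s) as [g1 [e1 [Hs1 E1]]]. destruct (R s') as [g2 [e2 [Hs2 E2]]].
  exists (comp g2 (ginv g1)), (xorb e2 e1). split.
  - apply sym_comp; auto. apply sym_inv; auto.
  - rewrite gstrand_comp, <- E1, gstrand_inv. exact E2.
Qed.

Definition zr1 (n : Z) : list Z := map (fun x => x + 1) (zl (n - 1)).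

Definition order_check (D : design) p n : bool :=
  (0 <? n) &&
  forallb (fun i => forallb (fun k => Bool.eqb (D i (k+n)) (D i k) && Bool.eqb (D (k+n) i) (D k i)) (zl p)) (zl p) &&
  forallb (fun i => forallb (fun m =>
      existsb (fun k => negb (Bool.eqb (D i (k+m)) (D i k))) (zl p) &&
      existsb (fun k => negb (Bool.eqb (D (k+m) i) (D k i))) (zl p)) (zr1 n)) (zl p).

Lemma order_ok D p n : per D p -> 0 < p -> order_check D p n = true -> has_order D n.
Proof.
  intros Hper Hp H. unfold order_check in H. rewrite !andb_true_iff in H.
  destruct H as [[Hn H1] H2]. apply Z.ltb_lt in Hn.
  assert (M : forall a : Z, (a mod p) mod p = a mod p) by (intros; rewrite Z.mod_mod; lia).
  assert (C1 : forall i k, D i (k + n) = D i k /\ D (k + n) i = D k i).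
  { intros i k.
    pose proof (forallb_zl _ _ (i mod p) H1 (mod_range p i Hp)) as E. cbv beta in E.
    pose proof (forallb_zl _ _ (k mod p) E (mod_range p k Hp)) as E'. cbv beta in E'.
    rewrite andb_true_iff in E'. destruct E' as [Ea Eb].
    apply Bool.eqb_prop in Ea, Eb.
    assert (Kn : (k + n) mod p = (k mod p + n) mod p) by (rewrite Z.add_mod_idemp_l; lia).
    split.
    - rewrite (per_congr D p i (k+n) (i mod p) (k mod p + n)), Ea; auto.

    - rewrite (per_congr D p (k+n) i (k mod p + n) (i mod p)), Eb; auto.
 }
  assert (C2 : forall i m, 0 < m < n ->
     (exists k, D i (k+m) <> D i k) /\ (exists k, D (k+m) i <> D k i)).
  { intros i m Hm.
    pose proof (forallb_zl _ _ (i mod p) H2 (mod_range p i Hp)) as E. cbv beta in E.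
    rewrite forallb_forall in E.
    assert (Hin : In m (zr1 n)).
    { unfold zr1. apply in_map_iff. exists (m - 1). split; [lia|]. apply zl_in. lia. }
    specialize (E m Hin). rewrite andb_true_iff in E. destruct E as [Ea Eb].
    apply existsb_exists in Ea, Eb. destruct Ea as [k [_ Ea]], Eb as [k' [_ Eb]].
    split; [exists k | exists k'].
    - intros Heq. rewrite (per_congr D p i (k+m) (i mod p) (k+m)) in Heq; auto.
      rewrite (per_congr D p i k (i mod p) k) in Heq; auto. rewrite Heq in Ea.
      rewrite Bool.eqb_reflx in Ea. discriminate.
    - intros Heq. rewrite (per_congr D p (k'+m) i (k'+m) (i mod p)) in Heq; auto.
      rewrite (per_congr D p k' i k' (i mod p)) in Heq; auto. rewrite Heq in Eb.
      rewrite Bool.eqb_reflx in Eb. discriminate. }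
  split.
  - intros i. split; [lia|split].
    + intros k. apply C1.
    + intros m Hm Hper'. destruct (C2 i m Hm) as [[k Hk] _]. apply Hk, Hper'.
  - intros j. split; [lia|split].
    + intros k. apply C1.
    + intros m Hm Hper'. destruct (C2 j m Hm) as [_ [k Hk]]. apply Hk, Hper'.
Qed.


Definition mkD (p : Z) (t : list Z) : design :=
  fun i j => Z.testbit (nth (Z.to_nat (i mod p)) t 0) (j mod p).

Lemma mkD_per p t : 0 < p -> per (mkD p t) p.
Proof. intros Hp x y. unfold mkD. rewrite !Z.mod_mod by lia. reflexivity. Qed.

Definition master_check p t n P1 P2 M N eP eQ tbl root fl bl : bool :=
  let D := mkD p t in
  (0 <? p) && (0 <? M*M+N*N) && inlatb M N p 0 && inlatb M N 0 p &&
  lat_check D p M N && rev_check D p && Z.even (P1+P2) &&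
  sym_check D p (qturn P1 P2) eP &&
  sym_check D p (qturn (fst (lu_centre P1 P2 M N)) (snd (lu_centre P1 P2 M N))) eQ &&
  hang_check D p root fl bl && iso_check D p tbl && order_check D p n.

Lemma master p t n P1 P2 M N eP eQ tbl root fl bl :
  master_check p t n P1 P2 M N eP eQ tbl root fl bl = true ->
  let D := mkD p t in
  is_fabric D /\ isonemal D /\ p4_type D /\ lattice_unit D P1 P2 M N /\
  is_sym D (qturn P1 P2) eP /\
  is_sym D (qturn (fst (lu_centre P1 P2 M N)) (snd (lu_centre P1 P2 M N))) eQ /\
  has_order D n.
Proof.
  intros H D. unfold master_check in H. fold D in H. rewrite !andb_true_iff in H.
  destruct H as [[[[[[[[[[[H1 H2] H3] H4] H5] H6] H7] H8] H9] H10] H11] H12].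
  apply Z.ltb_lt in H1. apply Z.ltb_lt in H2.
  assert (Hper : per D p) by (apply mkD_per; auto).
  assert (Q1 : is_sym D (qturn P1 P2) eP) by (apply (sym_check_sound D p); auto).
  assert (Q2 : is_sym D (qturn (fst (lu_centre P1 P2 M N)) (snd (lu_centre P1 P2 M N))) eQ)
    by (apply (sym_check_sound D p); auto).
  split; [|split; [|split; [|split; [|split; [|split]]]]].
  - split.
    + exists p. split; [exact H1|]. intros i j.
      assert (E : forall x, (x + p) mod p = x mod p).
      { intros x. replace (x + p) with (x + 1 * p) by ring. apply Z_mod_plus_full. }
      rewrite (Hper (i+p) j), (Hper i (j + p)), (Hper i j), !E.
      split; reflexivity.
    + apply (hang_ok D p root fl bl); auto.
  - apply (iso_ok D p tbl); auto.
  - split.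
    + exists (qturn P1 P2), eP. split; auto.
    + apply (rev_check_ok D p); auto.
  - split; [exact H7|split; [|split]].
    + apply (lat_check_ok D p); auto.
    + exists eP; auto.
    + exists eQ; auto.
  - exact Q1.
  - exact Q2.
  - apply (order_ok D p n); auto.
Qed.

Lemma build S p t n P1 P2 M N L eP eQ tbl root fl bl :
  master_check p t n P1 P2 M N eP eQ tbl root fl bl = true ->
  (M, N) = lbase L 1 2 -> subspecies_cond S L eP eQ (Z.odd P1) ->
  (exists D, in_subspecies D S /\ has_order D n /\ based_on_area D 5).
Proof.
  intros H HL HS. destruct (master _ _ _ _ _ _ _ _ _ _ _ _ _ H) as [F [I [P [LU [Q1 [Q2 O]]]]]].
  exists (mkD p t). split; [|split; auto].
  - split; [auto|split; [auto|split; [auto|]]].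
    exists P1, P2, M, N, L, eP, eQ. split; [auto|split; [|split; [auto|split; auto]]].
    exists 1, 2. split; auto. split; [reflexivity| discriminate].
  - exists P1, P2, M, N, L, 1, 2. split; [auto|split; [|split; [auto|reflexivity]]].
    split; [reflexivity| discriminate].
Qed.

Lemma univ S D : in_subspecies D S -> based_on_area D 5 ->
  exists col, thin_striping 5 col /\ perfect D col /\ redundant_as_satin53 col.
Proof.
  intros [_ [_ [[_ Hrev] _]]] [P1 [P2 [M [N [L [M1 [N1 [Hlu [_ [HL H5]]]]]]]]]].
  apply (universal D P1 P2 M N L M1 N1); auto.
Qed.


Definition d33_3_t : list Z := [782; 781; 236; 220; 707; 451; 59; 55; 944; 880].
Definition d33_3_tbl : list (gmap * bool) := [(GMap false false false 0 0, false); (GMap true true false 1 0, false); (GMap false true true 1 1, false); (GMap true false true 0 1, false); (GMap false false false 2 4, false); (GMap true true false 7 2, false); (GMap false true true 3 5, false); (GMap true false true 6 3, false); (GMap false false false 4 8, false); (GMap true true false 3 4, false); (GMap false true true 5 9, false); (GMap true false true 2 5, false); (GMap false false false 6 2, false); (GMap true true false 9 6, false); (GMap false true true 7 3, false); (GMap true false true 8 7, false); (GMap false false false 8 6, false); (GMap true true false 5 8, false); (GMap false true true 9 7, false); (GMap true false true 4 9, false)].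
Definition d33_3_fl : list node := [(false,0); (false,4); (false,5); (false,6); (false,7); (true,1); (true,4); (true,5); (true,6); (true,7); (true,3); (true,8); (true,9); (true,2); (false,1); (false,2); (false,3); (false,8); (false,9)].
Definition d33_3_bl : list node := [(false,1); (false,2); (false,3); (false,8); (false,9); (true,1); (true,2); (true,3); (true,8); (true,9); (true,4); (true,5); (true,6); (true,7); (false,0); (false,5); (false,6); (false,7); (false,4)].
Lemma d33_3_ex : exists D, in_subspecies D S33_3 /\ has_order D 10 /\ based_on_area D 5.
Proof.
  apply (build S33_3 10 d33_3_t 10 1 1 2 4 L3 false false d33_3_tbl (true,0) d33_3_fl d33_3_bl).
  - vm_compute. reflexivity.
  - reflexivity.
  - simpl; repeat split; (reflexivity || discriminate).
Qed.

Definition d33_4_t : list Z := [395226; 456729; 432159; 416736; 514656; 530799; 532329; 778341; 680061; 618369; 1010049; 26046; 32166; 1016214; 623094; 376326; 894471; 104184; 128664; 919131].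
Definition d33_4_tbl : list (gmap * bool) := [(GMap false false false 0 0, false); (GMap true true false 1 0, false); (GMap false true true 1 1, false); (GMap true false true 0 1, false); (GMap false false false 2 14, false); (GMap true true false 7 2, false); (GMap false true true 3 15, false); (GMap true false true 6 3, false); (GMap false false false 4 8, false); (GMap true true false 13 4, false); (GMap false true true 5 9, false); (GMap true false true 12 5, false); (GMap false false false 6 2, false); (GMap true true false 19 6, false); (GMap false true true 7 3, false); (GMap true false true 18 7, false); (GMap false false false 8 16, false); (GMap true true false 5 8, false); (GMap false true true 9 17, false); (GMap true false true 4 9, false); (GMap false false false 10 10, false); (GMap true true false 11 10, false); (GMap false true true 11 11, false); (GMap true false true 10 11, false); (GMap false false false 12 4, false); (GMap true true false 17 12, false); (GMap false true true 13 5, false); (GMap true false true 16 13, false); (GMap false false false 14 18, false); (GMap true true false 3 14, false); (GMap false true true 15 19, false); (GMap true false true 2 15, false); (GMap false false false 16 12, false); (GMap true true false 9 16, false); (GMap false true true 17 13, false); (GMap true false true 8 17, false); (GMap false false false 18 6, false); (GMap true true false 15 18, false); (GMap false true true 19 7, false); (GMap true false true 14 19, false)].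
Definition d33_4_fl : list node := [(false,0); (false,2); (false,5); (false,11); (false,12); (false,13); (false,14); (false,15); (false,16); (false,19); (true,1); (true,2); (true,5); (true,6); (true,7); (true,8); (true,9); (true,10); (true,16); (true,19); (true,11); (true,12); (true,13); (true,14); (true,15); (true,3); (true,4); (true,17); (true,18); (false,1); (false,6); (false,7); (false,8); (false,9); (false,10); (false,4); (false,17); (false,18); (false,3)].
Definition d33_4_bl : list node := [(false,1); (false,3); (false,4); (false,6); (false,7); (false,8); (false,9); (false,10); (false,17); (false,18); (true,1); (true,3); (true,4); (true,6); (true,7); (true,8); (true,9); (true,10); (true,17); (true,18); (true,12); (true,13); (true,14); (true,15); (true,16); (true,5); (true,2); (true,11); (true,19); (false,0); (false,11); (false,12); (false,13); (false,14); (false,15); (false,5); (false,16); (false,19); (false,2)].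
Lemma d33_4_ex : exists D, in_subspecies D S33_4 /\ has_order D 20 /\ based_on_area D 5.
Proof.
  apply (build S33_4 20 d33_4_t 20 1 1 (-2) 6 L4 false false d33_4_tbl (true,0) d33_4_fl d33_4_bl).
  - vm_compute. reflexivity.
  - reflexivity.
  - simpl; repeat split; (reflexivity || discriminate).
Qed.

Definition d34_t : list Z := [565; 710; 856; 107; 397; 689; 214; 794; 355; 428].
Definition d34_tbl : list (gmap * bool) := [(GMap false false false 0 0, false); (GMap true false true 7 0, false); (GMap false false false 1 7, false); (GMap true false true 0 1, false); (GMap false false false 2 4, false); (GMap true false true 3 2, false); (GMap false false false 3 1, false); (GMap true false true 6 3, false); (GMap false false false 4 8, false); (GMap true false true 9 4, false); (GMap false false false 5 5, false); (GMap true false true 2 5, false); (GMap false false false 6 2, false); (GMap true false true 5 6, false); (GMap false false false 7 9, false); (GMap true false true 8 7, false); (GMap false false false 8 6, false); (GMap true false true 1 8, false); (GMap false false false 9 3, false); (GMap true false true 4 9, false)].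
Definition d34_fl : list node := [(false,1); (false,3); (false,6); (false,7); (false,8); (true,1); (true,3); (true,6); (true,7); (true,8); (true,2); (true,4); (true,9); (true,5); (false,0); (false,4); (false,5); (false,2); (false,9)].
Definition d34_bl : list node := [(false,0); (false,2); (false,4); (false,5); (false,9); (true,1); (true,2); (true,6); (true,7); (true,9); (true,3); (true,5); (true,8); (true,4); (false,1); (false,6); (false,7); (false,3); (false,8)].
Lemma d34_ex : exists D, in_subspecies D S34 /\ has_order D 10 /\ based_on_area D 5.
Proof.
  apply (build S34 10 d34_t 10 1 1 (-1) 3 L2 false false d34_tbl (true,0) d34_fl d34_bl).
  - vm_compute. reflexivity.
  - reflexivity.
  - simpl; repeat split; (reflexivity || discriminate).
Qed.

Definition d35_3_t : list Z := [600; 420; 393; 582; 150; 105; 354; 657; 549; 282].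
Definition d35_3_tbl : list (gmap * bool) := [(GMap false false false 0 0, false); (GMap true true false 1 0, true); (GMap false true true 1 1, false); (GMap true false true 0 1, true); (GMap false false false 2 4, false); (GMap true true false 7 2, true); (GMap false true true 3 5, false); (GMap true false true 6 3, true); (GMap false false false 4 8, false); (GMap true true false 3 4, true); (GMap false true true 5 9, false); (GMap true false true 2 5, true); (GMap false false false 6 2, false); (GMap true true false 9 6, true); (GMap false true true 7 3, false); (GMap true false true 8 7, true); (GMap false false false 8 6, false); (GMap true true false 5 8, true); (GMap false true true 9 7, false); (GMap true false true 4 9, true)].
Definition d35_3_fl : list node := [(false,0); (false,1); (false,2); (false,5); (false,7); (false,8); (true,2); (true,5); (true,7); (true,8); (true,3); (true,4); (true,6); (true,9); (true,1); (false,4); (false,6); (false,9); (false,3)].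
Definition d35_3_bl : list node := [(false,3); (false,4); (false,6); (false,9); (true,1); (true,3); (true,4); (true,6); (true,7); (true,8); (true,2); (true,5); (true,9); (false,2); (false,5); (false,7); (false,8); (false,1); (false,0)].
Lemma d35_3_ex : exists D, in_subspecies D S35_3 /\ has_order D 10 /\ based_on_area D 5.
Proof.
  apply (build S35_3 10 d35_3_t 10 1 1 2 4 L3 true true d35_3_tbl (true,0) d35_3_fl d35_3_bl).
  - vm_compute. reflexivity.
  - reflexivity.
  - simpl; repeat split; (reflexivity || discriminate).
Qed.

Definition d35_4_t : list Z := [430503; 615003; 645702; 451977; 108393; 154518; 673437; 362862; 485658; 759333; 433572; 618072; 596598; 402873; 894057; 940182; 685713; 375138; 289242; 562917].
Definition d35_4_tbl : list (gmap * bool) := [(GMap false false false 0 0, false); (GMap true true false 1 0, true); (GMap false true true 1 1, false); (GMap true false true 0 1, true); (GMap false false false 2 14, false); (GMap true true false 7 2, true); (GMap false true true 3 15, false); (GMap true false true 6 3, true); (GMap false false false 4 8, false); (GMap true true false 13 4, true); (GMap false true true 5 9, false); (GMap true false true 12 5, true); (GMap false false false 6 2, false); (GMap true true false 19 6, true); (GMap false true true 7 3, false); (GMap true false true 18 7, true); (GMap false false false 8 16, false); (GMap true true false 5 8, true); (GMap false true true 9 17, false); (GMap true false true 4 9, true); (GMap false false false 10 10, false); (GMap true true false 11 10, true); (GMap false true true 11 11, false); (GMap true false true 10 11, true); (GMap false false false 12 4, false); (GMap true true false 17 12, true); (GMap false true true 13 5, false); (GMap true false true 16 13, true); (GMap false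 false false 14 18, false); (GMap true true false 3 14, true); (GMap false true true 15 19, false); (GMap true false true 2 15, true); (GMap false false false 16 12, false); (GMap true true false 9 16, true); (GMap false true true 17 13, false); (GMap true false true 8 17, true); (GMap false false false 18 6, false); (GMap true true false 15 18, true); (GMap false true true 19 7, false); (GMap true false true 14 19, true)].
Definition d35_4_fl : list node := [(false,3); (false,4); (false,6); (false,9); (false,10); (false,11); (false,13); (false,14); (false,16); (false,19); (true,1); (true,3); (true,4); (true,6); (true,7); (true,8); (true,11); (true,13); (true,14); (true,18); (true,5); (true,12); (true,15); (true,16); (true,2); (true,17); (true,19); (true,9); (true,10); (false,2); (false,5); (false,7); (false,8); (false,12); (false,15); (false,17); (false,18); (false,1); (false,0)].
Definition d35_4_bl : list node := [(false,0); (false,1); (false,2); (false,5); (false,7); (false,8); (false,12); (false,15); (false,17); (false,18); (true,2); (true,5); (true,7); (true,8); (true,10); (true,11); (true,12); (true,15); (true,17); (true,18); (true,3); (true,4); (true,6); (true,9); (true,13); (true,14); (true,16); (true,19); (true,1); (false,6); (false,9); (false,11); (false,14); (false,16); (false,19); (false,4); (false,3); (false,13); (false,10)].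
Lemma d35_4_ex : exists D, in_subspecies D S35_4 /\ has_order D 20 /\ based_on_area D 5.
Proof.
  apply (build S35_4 20 d35_4_t 20 1 1 (-2) 6 L4 true true d35_4_tbl (true,0) d35_4_fl d35_4_bl).
  - vm_compute. reflexivity.
  - reflexivity.
  - simpl; repeat split; (reflexivity || discriminate).
Qed.

Definition d36_1_t : list Z := [27; 15; 29; 23; 30].
Definition d36_1_tbl : list (gmap * bool) := [(GMap false false false 0 0, false); (GMap true false true 2 0, true); (GMap false false false 1 2, false); (GMap true false true 0 1, true); (GMap false false false 2 4, false); (GMap true false true 3 2, true); (GMap false false false 3 1, false); (GMap true false true 1 3, true); (GMap false false false 4 3, false); (GMap true false true 4 4, true)].
Definition d36_1_fl : list node := [(false,2); (true,1); (true,2); (true,3); (true,4); (false,4); (false,1); (false,3); (false,0)].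
Definition d36_1_bl : list node := [(false,0); (false,1); (false,3); (false,4); (true,4); (true,2); (true,3); (true,1); (false,2)].
Lemma d36_1_ex : exists D, in_subspecies D S36_1 /\ has_order D 5 /\ based_on_area D 5.
Proof.
  apply (build S36_1 5 d36_1_t 5 1 1 1 2 L1 true true d36_1_tbl (true,0) d36_1_fl d36_1_bl).
  - vm_compute. reflexivity.
  - reflexivity.
  - simpl; repeat split; (reflexivity || discriminate).
Qed.

Definition d36_2_t : list Z := [159; 915; 498; 318; 807; 996; 636; 591; 969; 249].
Definition d36_2_tbl : list (gmap * bool) := [(GMap false false false 0 0, false); (GMap true false true 7 0, true); (GMap false false false 1 7, false); (GMap true false true 0 1, true); (GMap false false false 2 4, false); (GMap true false true 3 2, true); (GMap false false false 3 1, false); (GMap true false true 6 3, true); (GMap false false false 4 8, false); (GMap true false true 9 4, true); (GMap false false false 5 5, false); (GMap true false true 2 5, true); (GMap false false false 6 2, false); (GMap true false true 5 6, true); (GMap false false false 7 9, false); (GMap true false true 8 7, true); (GMap false false false 8 6, false); (GMap true false true 1 8, true); (GMap false false false 9 3, false); (GMap true false true 4 9, true)].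
Definition d36_2_fl : list node := [(false,5); (false,6); (false,8); (false,9); (true,2); (true,3); (true,4); (true,5); (true,6); (true,9); (true,7); (true,8); (true,1); (false,0); (false,2); (false,3); (false,7); (false,4); (false,1)].
Definition d36_2_bl : list node := [(false,0); (false,1); (false,2); (false,3); (false,4); (false,7); (true,2); (true,3); (true,5); (true,6); (true,8); (true,9); (true,1); (true,4); (true,7); (false,5); (false,6); (false,8); (false,9)].
Lemma d36_2_ex : exists D, in_subspecies D S36_2 /\ has_order D 10 /\ based_on_area D 5.
Proof.
  apply (build S36_2 10 d36_2_t 10 1 1 (-1) 3 L2 true true d36_2_tbl (true,0) d36_2_fl d36_2_bl).
  - vm_compute. reflexivity.
  - reflexivity.
  - simpl; repeat split; (reflexivity || discriminate).
Qed.

Definition d36_s_t : list Z := [1; 128; 16; 2; 256; 32; 4; 512; 64; 8].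
Definition d36_s_tbl : list (gmap * bool) := [(GMap false false false 0 0, false); (GMap true false true 0 0, true); (GMap false false false 1 7, false); (GMap true false true 3 1, true); (GMap false false false 2 4, false); (GMap true false true 6 2, true); (GMap false false false 3 1, false); (GMap true false true 9 3, true); (GMap false false false 4 8, false); (GMap true false true 2 4, true); (GMap false false false 5 5, false); (GMap true false true 5 5, true); (GMap false false false 6 2, false); (GMap true false true 8 6, true); (GMap false false false 7 9, false); (GMap true false true 1 7, true); (GMap false false false 8 6, false); (GMap true false true 4 8, true); (GMap false false false 9 3, false); (GMap true false true 7 9, true)].
Definition d36_s_fl : list node := [(false,1); (false,2); (false,3); (false,4); (false,5); (false,6); (false,7); (false,8); (false,9); (true,3); (true,6); (true,9); (true,2); (true,5); (true,8); (true,1); (true,4); (true,7); (false,0)].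
Definition d36_s_bl : list node := [(false,0); (true,1); (true,2); (true,3); (true,4); (true,5); (true,6); (true,7); (true,8); (true,9); (false,7); (false,4); (false,1); (false,8); (false,5); (false,2); (false,9); (false,6); (false,3)].
Lemma d36_s_ex : exists D, in_subspecies D S36_s /\ has_order D 10 /\ based_on_area D 5.
Proof.
  apply (build S36_s 10 d36_s_t 10 0 0 (-1) 3 L2 true true d36_s_tbl (true,0) d36_s_fl d36_s_bl).
  - vm_compute. reflexivity.
  - reflexivity.
  - simpl; repeat split; (reflexivity || discriminate).
Qed.

Definition d37_t : list Z := [1068492622961; 243871747198; 241002840526; 30549242318; 855227789816; 858516127288; 124076019256; 124024638983; 135500265671; 977314658503; 977135351836; 963982001948; 603207550751; 603413071843; 557510565091; 488787877088; 489505103756; 542118503308; 885704680321; 884882595953; 1068492622961; 243871747198; 241002840526; 30549242318; 855227789816; 858516127288; 124076019256; 124024638983; 135500265671; 977314658503; 977135351836; 963982001948; 603207550751; 603413071843; 557510565091; 488787877088; 489505103756; 542118503308; 885704680321; 884882595953].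
Definition d37_tbl : list (gmap * bool) := [(GMap false false false 0 0, false); (GMap true true false 1 0, false); (GMap false true true 1 1, false); (GMap true false true 0 1, false); (GMap false false false 2 14, true); (GMap true true false 7 2, true); (GMap false true true 3 15, true); (GMap true false true 6 3, true); (GMap false false false 4 8, false); (GMap true true false 13 4, false); (GMap false true true 5 9, false); (GMap true false true 12 5, false); (GMap false false false 6 2, true); (GMap true true false 19 6, true); (GMap false true true 7 3, true); (GMap true false true 18 7, true); (GMap false false false 8 16, false); (GMap true true false 5 8, false); (GMap false true true 9 17, false); (GMap true false true 4 9, false); (GMap false false false 10 10, true); (GMap true true false 11 10, true); (GMap false true true 11 11, true); (GMap true false true 10 11, true); (GMap false false false 12 4, false); (GMap true true false 17 12, false); (GMap false true true 13 5, false); (GMap true false true 16 13, false); (GMap false false false 14 18, true); (GMap true true false 3 14, true); (GMap false true true 15 19, true); (GMap true false true 2 15, true); (GMap false false false 16 12, false); (GMap true true false 9 16, false); (GMap false true true 17 13, false); (GMap true false true 8 17, false); (GMap false false false 18 6, true); (GMap true true false 15 18, true); (GMap false true true 19 7, true); (GMap true false true 14 19, true); (GMap false false false 20 0, false); (GMap true true false 1 20, false); (GMap false true true 21 1, false); (GMap true false true 0 21, false); (GMap false false false 22 14, true); (GMap true true false 7 22, true); (GMap false true true 23 15, true); (GMap true false true 6 23, true); (GMap false false false 24 8, false); (GMap true true false 13 24, false); (GMap false true true 25 9, false); (GMap true false true 12 25, false); (GMap false false false 26 2, true); (GMap true true false 19 26, true); (GMap false true true 27 3, true); (GMap true false true 18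 27, true); (GMap false false false 28 16, false); (GMap true true false 5 28, false); (GMap false true true 29 17, false); (GMap true false true 4 29, false); (GMap false false false 30 10, true); (GMap true true false 11 30, true); (GMap false true true 31 11, true); (GMap true false true 10 31, true); (GMap false false false 32 4, false); (GMap true true false 17 32, false); (GMap false true true 33 5, false); (GMap true false true 16 33, false); (GMap false false false 34 18, true); (GMap true true false 3 34, true); (GMap false true true 35 19, true); (GMap true false true 2 35, true); (GMap false false false 36 12, false); (GMap true true false 9 36, false); (GMap false true true 37 13, false); (GMap true false true 8 37, false); (GMap false false false 38 6, true); (GMap true true false 15 38, true); (GMap false true true 39 7, true); (GMap true false true 14 39, true)].
Definition d37_fl : list node := [(false,1); (false,2); (false,3); (false,7); (false,8); (false,9); (false,12); (false,13); (false,14); (false,21); (false,22); (false,23); (false,27); (false,28); (false,29); (false,32); (false,33); (false,34); (true,1); (true,2); (true,3); (true,7); (true,8); (true,9); (true,12); (true,13); (true,14); (true,21); (true,22); (true,23); (true,27); (true,28); (true,29); (true,32); (true,33); (true,34); (true,10); (true,11); (true,16); (true,17); (true,30); (true,31); (true,36); (true,37); (true,4); (true,5); (true,6); (true,24); (true,25); (true,26); (true,15); (true,18); (true,35); (true,38); (true,19); (true,39); (false,0); (false,18); (false,19); (false,20); (false,38); (false,39); (false,4); (false,5); (false,10); (false,11); (false,24); (false,25); (false,30); (false,31); (false,15); (false,16); (false,17); (false,35); (false,36); (false,37); (false,6); (false,26); (true,20)].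
Definition d37_bl : list node := [(false,0); (false,4); (false,5); (false,6); (false,10); (false,11); (false,15); (false,16); (false,17); (false,18); (false,19); (false,20); (false,24); (false,25); (false,26); (false,30); (false,31); (false,35); (false,36); (false,37); (false,38); (false,39); (true,1); (true,2); (true,3); (true,4); (true,5); (true,6); (true,10); (true,11); (true,15); (true,16); (true,17); (true,21); (true,22); (true,23); (true,24); (true,25); (true,26); (true,30); (true,31); (true,35); (true,36); (true,37); (true,7); (true,8); (true,9); (true,13); (true,14); (true,18); (true,27); (true,28); (true,29); (true,33); (true,34); (true,38); (true,12); (true,32); (true,19); (true,39); (false,1); (false,2); (false,3); (false,21); (false,22); (false,23); (false,7); (false,8); (false,27); (false,28); (false,12); (false,13); (false,14); (false,32); (false,33); (false,34); (false,9); (false,29); (true,20)].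
Lemma d37_ex : exists D, in_subspecies D S37 /\ has_order D 20 /\ based_on_area D 5.
Proof.
  apply (build S37 40 d37_t 20 1 1 (-2) 6 L4 false true d37_tbl (true,0) d37_fl d37_bl).
  - vm_compute. reflexivity.
  - reflexivity.
  - simpl; repeat split; (reflexivity || discriminate).
Qed.

Definition d38_t : list Z := [191301; 570834; 84909; 303831; 738606; 381579; 765204; 186186; 339636; 166749; 857274; 477741; 963666; 744744; 309969; 666996; 283371; 862389; 708939; 881826].
Definition d38_tbl : list (gmap * bool) := [(GMap false false false 0 0, false); (GMap true true false 1 0, false); (GMap false true true 1 1, false); (GMap true false true 0 1, false); (GMap false false false 2 4, true); (GMap true true false 7 2, false); (GMap false true true 3 5, true); (GMap true false true 6 3, false); (GMap false false false 4 8, false); (GMap true true false 3 4, true); (GMap false true true 5 9, false); (GMap true false true 2 5, true); (GMap false false false 6 2, false); (GMap true true false 9 6, true); (GMap false true true 7 3, false); (GMap true false true 8 7, true); (GMap false false false 8 6, true); (GMap true true false 5 8, false); (GMap false true true 9 7, true); (GMap true false true 4 9, false); (GMap false false false 10 0, true); (GMap true true false 1 10, true); (GMap false true true 11 1, true); (GMap true false true 0 11, true); (GMap false false false 12 4, false); (GMap true true false 7 12, true); (GMap false true true 13 5, false); (GMap true false true 6 13, true); (GMap false false false 14 8, true); (GMap true true false 3 14, false); (GMap false true true 15 9, true); (GMap true false true 2 15, false); (GMap false false false 16 2, true); (GMap true true false 9 16, false); (GMap false true true 17 3, true); (GMap true false true 8 17, false); (GMap false false false 18 6, false); (GMap true true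 false 5 18, true); (GMap false true true 19 7, false); (GMap true false true 4 19, true)].
Definition d38_fl : list node := [(false,1); (false,3); (false,4); (false,5); (false,7); (false,10); (false,12); (false,16); (false,18); (false,19); (true,1); (true,3); (true,4); (true,5); (true,7); (true,10); (true,12); (true,16); (true,18); (true,19); (true,2); (true,9); (true,11); (true,13); (true,6); (true,8); (true,14); (true,15); (true,17); (false,0); (false,2); (false,9); (false,11); (false,14); (false,17); (false,8); (false,6); (false,13); (false,15)].
Definition d38_bl : list node := [(false,0); (false,2); (false,6); (false,8); (false,9); (false,11); (false,13); (false,14); (false,15); (false,17); (true,1); (true,4); (true,6); (true,7); (true,8); (true,10); (true,12); (true,13); (true,15); (true,19); (true,5); (true,14); (true,16); (true,18); (true,2); (true,11); (true,17); (true,3); (true,9); (false,1); (false,4); (false,7); (false,10); (false,12); (false,19); (false,3); (false,5); (false,16); (false,18)].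
Lemma d38_ex : exists D, in_subspecies D S38 /\ has_order D 20 /\ based_on_area D 5.
Proof.
  apply (build S38 20 d38_t 20 1 1 2 4 L3 false true d38_tbl (true,0) d38_fl d38_bl).
  - vm_compute. reflexivity.
  - reflexivity.
  - simpl; repeat split; (reflexivity || discriminate).
Qed.

Definition d39_t : list Z := [465; 186; 279; 930; 372; 558; 837; 744; 93; 651].
Definition d39_tbl : list (gmap * bool) := [(GMap false false false 0 0, false); (GMap true false true 2 0, true); (GMap false false false 1 2, true); (GMap true false true 0 1, false); (GMap false false false 2 4, false); (GMap true false true 3 2, false); (GMap false false false 3 1, false); (GMap true false true 1 3, true); (GMap false false false 4 3, true); (GMap true false true 4 4, true); (GMap false false false 5 0, true); (GMap true false true 2 5, false); (GMap false false false 6 2, false); (GMap true false true 0 6, true); (GMap false false false 7 4, true); (GMap true false true 3 7, true); (GMap false false false 8 1, true); (GMap true false true 1 8, false); (GMap false false false 9 3, false); (GMap true false true 4 9, false)].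
Definition d39_fl : list node := [(false,1); (false,2); (false,3); (false,5); (false,9); (true,1); (true,2); (true,3); (true,5); (true,9); (true,4); (true,6); (true,8); (true,7); (false,0); (false,6); (false,8); (false,7); (false,4)].
Definition d39_bl : list node := [(false,0); (false,4); (false,6); (false,7); (false,8); (true,1); (true,3); (true,4); (true,5); (true,7); (true,6); (true,9); (true,2); (true,8); (false,1); (false,3); (false,5); (false,9); (false,2)].
Lemma d39_ex : exists D, in_subspecies D S39 /\ has_order D 10 /\ based_on_area D 5.
Proof.
  apply (build S39 10 d39_t 10 1 1 1 2 L1 false true d39_tbl (true,0) d39_fl d39_bl).
  - vm_compute. reflexivity.
  - reflexivity.
  - simpl; repeat split; (reflexivity || discriminate).
Qed.

Theorem theorem1 :
  forall S : subspecies, exists n : Z,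
    (exists D : design, in_subspecies D S /\ has_order D n /\ based_on_area D 5) /\
    (forall D : design, in_subspecies D S -> has_order D n -> based_on_area D 5 ->
       exists col : colouring,
         thin_striping 5 col /\ perfect D col /\ redundant_as_satin53 col).
Proof.
  intros S. destruct S; eexists; split.
  all: first [ exact d33_3_ex | exact d33_4_ex | exact d34_ex | exact d35_3_ex | exact d35_4_ex | exact d36_1_ex | exact d36_2_ex | exact d36_s_ex | exact d37_ex | exact d38_ex | exact d39_ex | (intros D HS _ Hb; exact (univ _ _ HS Hb)) ].
Qed.
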